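(* (1) An MT-morphism $f:M\to N$ between $T_0$-algebras is a D-morphism (of MT-algebras) if and only if its restriction $f|_{\mathcal O M}:\mathcal O M\to\mathcal O N$ is a D-morphism of frames. (2) Every MT-morphism between $T_D$-algebras is a D-morphism.
   Context: An MT-algebra is a pair $(M,\square)$ where $M$ is a complete boolean algebra and $\square:M\to M$ satisfies $\square 1=1$, $\square(a\wedge b)=\square a\wedge\square b$, $\square a\le a$, $\square a\le\square\square a$; $\Diamond a=\neg\square\neg a$; open: $\square a=a$; closed: $\Diamond a=a$; locally closed: $a=\square b\wedge\Diamond c$. $\mathcal O M$ is the frame of open elements. Saturated: a meet of opens; weakly locally closed: $s\wedge c$ with $s$ saturated, $c$ closed. $M$ is a $T_0$-algebra if every element is a join of weakly locally closed elements, and a $T_D$-algebra if every element is a join of locally closed elements. An MT-morphism is a complete boolean homomorphism $h:M\to N$ with $h(\square a)\le\square h(a)$; it restricts to a frame morphism $\mathcal O M\to\mathcal O N$ and has a left adjoint $h^*(b)=\bigwedge\{a: b\le h(a)\}$; $h$ is a D-morphism if $h^*$ maps locally closed atoms to locally closed atoms. For a frame and $a<b$, $a\lessdot b$ means no $x$ with $a<x<b$; a filter $F$ is slicing if prime and there are $b\in F$, $a\notin F$ with $a\lessdot b$; a frame morphism $g:L\to K$ is a D-morphism if $g^{-1}(F)$ is slicing for every slicing filter $F$ of $K$. *)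

(* Defs.v *)
Definition pair2 {T : Type} (a b : T) : T -> Prop := fun x => x = a \/ x = b.
Definition empty_fam {T : Type} : T -> Prop := fun _ => False.

Record CBA := {
  car :> Type;
  le : car -> car -> Prop;
  sup : (car -> Prop) -> car;
  inf : (car -> Prop) -> car;
  neg : car -> car;
  le_refl : forall x, le x x;
  le_antisym : forall x y, le x y -> le y x -> x = y;
  le_trans : forall x y z, le x y -> le y z -> le x z;
  sup_ub : forall S x, S x -> le x (sup S);
  sup_least : forall S y, (forall x, S x -> le x y) -> le (sup S) y;
  inf_lb : forall S x, S x -> le (inf S) x;
  inf_greatest : forall S y, (forall x, S x -> le y x) -> le y (inf S);
  distr : forall a b c,
    inf (pair2 a (sup (pair2 b c))) = sup (pair2 (inf (pair2 a b)) (inf (pair2 a c)));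
  compl_meet : forall a, inf (pair2 a (neg a)) = sup empty_fam;
  compl_join : forall a, sup (pair2 a (neg a)) = inf empty_fam
}.

Arguments le {c0} _ _ : rename.
Arguments sup {c0} _ : rename.
Arguments inf {c0} _ : rename.
Arguments neg {c0} _ : rename.

Section CBAops.
Context {M : CBA}.
Definition top : M := inf empty_fam.
Definition bot : M := sup empty_fam.
Definition meet (a b : M) : M := inf (pair2 a b).
Definition join (a b : M) : M := sup (pair2 a b).
Definition lt (a b : M) : Prop := le a b /\ a <> b.
Definition atom (a : M) : Prop := a <> bot /\ ~ (exists x, lt bot x /\ lt x a).
End CBAops.

Record MTAlg := {
  cba :> CBA;
  box : cba -> cba;
  box_top : box top = top;
  box_meet : forall a b, box (meet a b) = meet (box a) (box b);
  box_defl : forall a, le (box a) a;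
  box_idem : forall a, le (box a) (box (box a))
}.

Arguments box {m} _.

Section MTnotions.
Context {M : MTAlg}.
Definition dia (a : M) : M := neg (box (neg a)).
Definition is_open (a : M) : Prop := box a = a.
Definition is_closed (a : M) : Prop := dia a = a.
Definition locally_closed (a : M) : Prop := exists b c : M, a = meet (box b) (dia c).
Definition saturated (s : M) : Prop :=
  exists S : M -> Prop, (forall x, S x -> is_open x) /\ s = inf S.
Definition weakly_locally_closed (a : M) : Prop :=
  exists s c : M, saturated s /\ is_closed c /\ a = meet s c.
Definition T0_algebra : Prop :=
  forall a : M, exists S : M -> Prop,
    (forall x, S x -> weakly_locally_closed x) /\ a = sup S.
Definition TD_algebra : Prop :=
  forall a : M, exists S : M -> Prop,
    (forall x, S x -> locally_closed x) /\ a = sup S.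
End MTnotions.

Definition image {A B : Type} (f : A -> B) (S : A -> Prop) : B -> Prop :=
  fun y => exists x, S x /\ y = f x.

Definition complete_bool_hom {M N : CBA} (h : M -> N) : Prop :=
  (forall S, h (sup S) = sup (image h S)) /\
  (forall S, h (inf S) = inf (image h S)) /\
  (forall a, h (neg a) = neg (h a)).

Definition MT_morphism {M N : MTAlg} (h : M -> N) : Prop :=
  complete_bool_hom h /\ forall a : M, le (h (box a)) (box (h a)).

Definition left_adj {M N : MTAlg} (h : M -> N) (b : N) : M :=
  inf (fun a : M => le b (h a)).

Definition D_morphism {M N : MTAlg} (h : M -> N) : Prop :=
  forall b : N, atom b -> locally_closed b ->
    atom (left_adj h b) /\ locally_closed (left_adj h b).

(** * Frame notions, for the frame O M of open elements.
   O M is the subset of open elements of M, with the induced order; its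
   finite meets, binary joins, top and bottom agree with those of M. *)

Section FrameNotions.
Context {M : MTAlg}.
Let S := @is_open M.
Definition covers_O (a b : M) : Prop :=
  lt a b /\ ~ (exists x, S x /\ lt a x /\ lt x b).
Definition filter_O (F : M -> Prop) : Prop :=
  (forall x, F x -> S x) /\ F top /\
  (forall x y, F x -> S y -> le x y -> F y) /\
  (forall x y, F x -> F y -> F (meet x y)).
Definition prime_filter_O (F : M -> Prop) : Prop :=
  filter_O F /\ ~ F bot /\
  (forall x y, S x -> S y -> F (join x y) -> F x \/ F y).
Definition slicing_filter_O (F : M -> Prop) : Prop :=
  prime_filter_O F /\
  exists a b, S a /\ S b /\ F b /\ ~ F a /\ covers_O a b.
End FrameNotions.

Definition restriction_frame_D_morphism {M N : MTAlg} (f : M -> N) : Prop :=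
  forall F : N -> Prop, slicing_filter_O F ->
    slicing_filter_O (fun a : M => is_open a /\ F (f a)).

(* Main.v *)
Require Import Defs.
From Stdlib Require Import Classical.

Section Lat.
Context {M : CBA}.
Implicit Types a b c d w x y z : M.

Lemma ltr x y z : le x y -> le y z -> le x z.
Proof. apply le_trans. Qed.
Lemma lrefl x : le x x. Proof. apply le_refl. Qed.
Lemma lanti x y : le x y -> le y x -> x = y. Proof. apply le_antisym. Qed.
Lemma meet_l a b : le (meet a b) a. Proof. apply inf_lb; left; reflexivity. Qed.
Lemma meet_r a b : le (meet a b) b. Proof. apply inf_lb; right; reflexivity. Qed.
Lemma meet_glb a b z : le z a -> le z b -> le z (meet a b).
Proof. intros; apply inf_greatest; intros w [-> | ->]; auto. Qed.
Lemma join_l a b : le a (join a b). Proof. apply sup_ub; left; reflexivity. Qed.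
Lemma join_r a b : le b (join a b). Proof. apply sup_ub; right; reflexivity. Qed.
Lemma join_lub a b z : le a z -> le b z -> le (join a b) z.
Proof. intros; apply sup_least; intros w [-> | ->]; auto. Qed.
Lemma bot_le x : le bot x. Proof. apply sup_least; intros w []. Qed.
Lemma le_top x : le x top. Proof. apply inf_greatest; intros w []. Qed.
Lemma le_bot x : le x bot -> x = bot. Proof. intro; apply lanti; auto using bot_le. Qed.
Lemma distr_le a b c : le (meet a (join b c)) (join (meet a b) (meet a c)).
Proof. unfold meet, join; rewrite distr; apply lrefl. Qed.
Lemma compl_m a : le (meet a (neg a)) bot.
Proof. unfold meet, bot; rewrite compl_meet; apply lrefl. Qed.
Lemma compl_j a : le top (join a (neg a)).
Proof. unfold join, top; rewrite compl_join; apply lrefl. Qed.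
Lemma meet_mono a b c d : le a c -> le b d -> le (meet a b) (meet c d).
Proof. intros; apply meet_glb; [eapply ltr; [apply meet_l|auto] | eapply ltr; [apply meet_r|auto]]. Qed.
Lemma join_mono a b c d : le a c -> le b d -> le (join a b) (join c d).
Proof. intros; apply join_lub; [eapply ltr; [|apply join_l]; auto | eapply ltr; [|apply join_r]; auto]. Qed.
Lemma meet_c a b : le (meet a b) (meet b a).
Proof. apply meet_glb; auto using meet_l, meet_r. Qed.
Lemma join_c a b : le (join a b) (join b a).
Proof. apply join_lub; auto using join_l, join_r. Qed.

Lemma L1 a c d : le (meet a c) bot -> le top (join a d) -> le c d.
Proof.
  intros H1 H2.
  apply ltr with (meet c (join a d)).
  { apply meet_glb; [apply lrefl | eapply ltr; [apply le_top | exact H2]]. }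
  eapply ltr; [apply distr_le|]. apply join_lub; [|apply meet_r].
  eapply ltr; [apply meet_c| eapply ltr; [exact H1| apply bot_le]].
Qed.

Lemma neg_neg a : neg (neg a) = a.
Proof.
  apply lanti.
  - apply (L1 (neg a)); [apply compl_m| eapply ltr; [apply compl_j| apply join_c]].
  - apply (L1 (neg a)); [eapply ltr; [apply meet_c|apply compl_m]| apply compl_j].
Qed.

Lemma le_of_disj x y : le (meet x (neg y)) bot -> le x y.
Proof.
  intro H; apply (L1 (neg y)); [eapply ltr; [apply meet_c|exact H]|].
  rewrite <- (neg_neg y) at 2. apply compl_j.
Qed.
Lemma disj_of_le x y : le x y -> le (meet x (neg y)) bot.
Proof. intro; eapply ltr; [apply meet_mono; [eassumption|apply lrefl]|apply compl_m]. Qed.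
Lemma neg_anti x y : le x y -> le (neg y) (neg x).
Proof. intro; apply (L1 x); [apply disj_of_le; auto|apply compl_j]. Qed.
Lemma lsplit x y z : le x (join y z) -> le (meet x (neg y)) z.
Proof.
  intro H. apply ltr with (meet (neg y) (join y z)).
  { eapply ltr; [apply meet_c| apply meet_mono; auto using lrefl]. }
  eapply ltr; [apply distr_le|]. apply join_lub; [|apply meet_r].
  eapply ltr; [apply meet_c|eapply ltr; [apply compl_m|apply bot_le]].
Qed.
Lemma lunsplit x y z : le (meet x (neg y)) z -> le x (join y z).
Proof.
  intro H. apply ltr with (meet x (join y (neg y))).
  { apply meet_glb; [apply lrefl| eapply ltr; [apply le_top|apply compl_j]]. }
  eapply ltr; [apply distr_le|]. apply join_mono; auto using meet_r.
Qed.
Lemma self_neg x : le x (neg x) -> x = bot.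
Proof. intro; apply le_bot; eapply ltr; [|apply compl_m]; apply meet_glb; auto using lrefl. Qed.

Lemma atom_split x y : atom x -> le x y \/ le x (neg y).
Proof.
  intros [Hx Ha].
  destruct (classic (meet x y = bot)) as [E|E].
  - right; apply le_of_disj; rewrite neg_neg, E; apply lrefl.
  - destruct (classic (meet x y = x)) as [E2|E2].
    + left; rewrite <- E2; apply meet_r.
    + exfalso; apply Ha; exists (meet x y); split; split; auto using bot_le, meet_l.
Qed.
Lemma atom_join x y z : atom x -> le x (join y z) -> le x y \/ le x z.
Proof.
  intros Ha H; destruct (atom_split x y Ha) as [H1|H1]; [left; auto|right].
  eapply ltr; [|apply (lsplit _ _ _ H)]; apply meet_glb; auto using lrefl.
Qed.
Lemma atom_nb x : atom x -> le x bot -> False.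
Proof. intros [H _] H2; apply H, le_bot, H2. Qed.

Lemma sup_nz (S : M -> Prop) : sup S <> bot -> exists w, S w /\ w <> bot.
Proof.
  intro H; apply NNPP; intro N; apply H, le_bot, sup_least.
  intros w Sw. destruct (classic (w = bot)) as [->|E]; [apply lrefl|].
  exfalso; apply N; eauto.
Qed.
End Lat.

Section MT.
Context {M : MTAlg}.
Implicit Types a b c d u v w x y z : M.

Lemma box_mono a b : le a b -> le (box a) (box b).
Proof.
  intro H. assert (E : meet a b = a) by (apply lanti; [apply meet_l|apply meet_glb; auto using lrefl]).
  rewrite <- E, box_meet. apply meet_r.
Qed.
Lemma open_box a : is_open (box a).
Proof. unfold is_open; apply lanti; [apply box_defl|apply box_idem]. Qed.
Lemma dia_ext a : le a (dia a).
Proof. unfold dia; rewrite <- (neg_neg a) at 1; apply neg_anti, box_defl. Qed.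
Lemma dia_mono a b : le a b -> le (dia a) (dia b).
Proof. intro; unfold dia; apply neg_anti, box_mono, neg_anti; auto. Qed.
Lemma dia_dia a : le (dia (dia a)) (dia a).
Proof. unfold dia; rewrite neg_neg; apply neg_anti, box_idem. Qed.
Lemma closed_neg u : is_open u -> is_closed (neg u).
Proof. unfold is_open, is_closed, dia; intro H; rewrite neg_neg, H; reflexivity. Qed.
Lemma open_neg c : is_closed c -> is_open (neg c).
Proof. unfold is_open, is_closed, dia; intro H. rewrite <- (neg_neg (box (neg c))), H; reflexivity. Qed.
Lemma open_top : is_open (@top M).
Proof. apply box_top. Qed.
Lemma open_meet u v : is_open u -> is_open v -> is_open (meet u v).
Proof. unfold is_open; intros; rewrite box_meet; congruence. Qed.
Lemma open_join u v : is_open u -> is_open v -> is_open (join u v).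
Proof.
  unfold is_open; intros Hu Hv; apply lanti; [apply box_defl|].
  apply join_lub.
  - apply ltr with (box u); [rewrite Hu; apply lrefl|apply box_mono, join_l].
  - apply ltr with (box v); [rewrite Hv; apply lrefl|apply box_mono, join_r].
Qed.
Lemma K1 u x w : is_open u -> atom x -> le w u -> le w (dia x) -> w <> bot -> le x u.
Proof.
  intros Hu Ha H1 H2 H3. destruct (atom_split x u Ha) as [H|H]; auto.
  exfalso; apply H3, le_bot.
  apply ltr with (meet u (neg u)); [|apply compl_m].
  apply meet_glb; auto. eapply ltr; [exact H2|].
  pose proof (closed_neg u Hu) as C; unfold is_closed in C; rewrite <- C.
  apply dia_mono; auto.
Qed.
End MT.

Section Hom.
Context {M N : MTAlg} (h : M -> N) (Hh : complete_bool_hom h).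

Lemma h_bot : le (h bot) bot.
Proof. destruct Hh as [Hs _]. unfold bot at 1; rewrite Hs; apply sup_least; intros y [x [[] _]]. Qed.
Lemma h_mono a b : le a b -> le (h a) (h b).
Proof.
  intro H. destruct Hh as [_ [Hi _]].
  assert (E : meet a b = a) by (apply lanti; [apply meet_l|apply meet_glb; auto using lrefl]).
  rewrite <- E; unfold meet; rewrite Hi. apply inf_lb. exists b; split; [right|]; reflexivity.
Qed.
Lemma adj_unit y : le y (h (left_adj h y)).
Proof.
  destruct Hh as [_ [Hi _]]. unfold left_adj; rewrite Hi.
  apply inf_greatest; intros z [x [Hx ->]]; exact Hx.
Qed.
Lemma adj_iff y u : le y (h u) <-> le (left_adj h y) u.
Proof.
  split; intro H; [apply inf_lb; exact H|].
  eapply ltr; [apply adj_unit|apply h_mono; auto].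
Qed.
Lemma atom_adj y : atom y -> atom (left_adj h y).
Proof.
  intros Ha. destruct Hh as [_ [_ Hn]]. split.
  - intro E. apply (atom_nb y Ha). eapply ltr; [apply adj_unit|]. rewrite E; apply h_bot.
  - intros [x [[_ bx] [xa nxa]]].
    destruct (atom_split y (h x) Ha) as [H|H].
    + apply nxa, lanti; auto. apply adj_iff; auto.
    + rewrite <- Hn in H. apply adj_iff in H. apply bx. symmetry. apply self_neg.
      eapply ltr; eauto.
Qed.
End Hom.

Section Main.
Context {M : MTAlg}.
Implicit Types a b c d u v w x y z : M.

Lemma lc_slicing x (G : M -> Prop) : atom x -> locally_closed x ->
  (forall u, G u <-> is_open u /\ le x u) -> slicing_filter_O G.
Proof.
  intros Ha [b [c Hx]] HG.
  assert (xq : le x (box b)) by (rewrite Hx; apply meet_l).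
  assert (xc : le x (dia c)) by (rewrite Hx; apply meet_r).
  assert (qd : le (meet (box b) (dia x)) x).
  { rewrite Hx at 2. apply meet_mono; [apply lrefl|].
    eapply ltr; [apply dia_mono; exact xc| apply dia_dia]. }
  assert (Oq : is_open (box b)) by apply open_box.
  assert (Ona : is_open (neg (dia x))) by (unfold dia; rewrite neg_neg; apply open_box).
  assert (Oa : is_open (meet (box b) (neg (dia x)))) by (apply open_meet; auto).
  assert (xna : ~ le x (meet (box b) (neg (dia x)))).
  { intro H; apply (atom_nb x Ha). apply ltr with (meet (dia x) (neg (dia x))); [|apply compl_m].
    apply meet_glb; [apply dia_ext| eapply ltr; [exact H| apply meet_r]]. }
  assert (qs : le (box b) (join (meet (box b) (neg (dia x))) x)).
  { apply ltr with (join (meet (box b) (neg (dia x))) (meet (box b) (dia x))).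
    - apply ltr with (meet (box b) (join (neg (dia x)) (dia x))); [|apply distr_le].
      apply meet_glb; [apply lrefl|]. eapply ltr; [apply le_top|].
      eapply ltr; [apply (compl_j (dia x))| apply join_c].
    - apply join_mono; [apply lrefl| exact qd]. }
  split; [split; [split; [|split; [|split]]|split]|].
  - intros u Hu; apply HG in Hu; tauto.
  - apply HG; split; [apply open_top| apply le_top].
  - intros u v Hu Hv Huv; apply HG in Hu; destruct Hu; apply HG; split; [auto| eapply ltr; eauto].
  - intros u v Hu Hv; apply HG in Hu; apply HG in Hv; destruct Hu, Hv; apply HG; split;
      [apply open_meet; auto| apply meet_glb; auto].
  - intro H; apply HG in H; destruct H; apply (atom_nb x Ha); auto.
  - intros u v Hu Hv H; apply HG in H; destruct H as [_ H].
    destruct (atom_join _ _ _ Ha H); [left|right]; apply HG; auto.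
  - exists (meet (box b) (neg (dia x))), (box b).
    split; [exact Oa|split; [exact Oq|split; [apply HG; auto|split; [intro H; apply HG in H; tauto|]]]].
    split.
    + split; [apply meet_l| intro E; apply xna; rewrite E; exact xq].
    + intros [v [Ov [[av nav] [vq nvq]]]].
      destruct (atom_split x v Ha) as [xv|xv].
      * apply nvq; apply lanti; auto. eapply ltr; [exact qs|]. apply join_lub; auto.
      * apply nav; apply lanti; auto.
        apply ltr with (meet v (neg x)).
        -- apply meet_glb; [apply lrefl|]. rewrite <- (neg_neg v). apply neg_anti; auto.
        -- apply lsplit. eapply ltr; [exact vq|]. eapply ltr; [exact qs| apply join_c].
Qed.

Lemma slicing_lc (T0 : @T0_algebra M) x (G : M -> Prop) : atom x ->
  (forall u, G u <-> is_open u /\ le x u) -> slicing_filter_O G -> locally_closed x.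
Proof.
  intros Ha HG [_ [a [b [Oa [Ob [Gb [nGa [[ab nab] Hcov]]]]]]]].
  apply HG in Gb; destruct Gb as [_ xb].
  assert (xna : ~ le x a) by (intro H; apply nGa, HG; auto).
  assert (Z : le (meet (meet b (dia x)) (neg x)) bot).
  { destruct (classic (meet (meet b (dia x)) (neg x) = bot)) as [E|E]; [rewrite E; apply lrefl|exfalso].
    destruct (T0 (meet (meet b (dia x)) (neg x))) as [S [HS ES]].
    rewrite ES in E. destruct (sup_nz S E) as [w [Sw wnz]].
    assert (wz : le w (meet (meet b (dia x)) (neg x))) by (rewrite ES; apply sup_ub; auto).
    assert (wb : le w b) by (eapply ltr; [exact wz| eapply ltr; apply meet_l]).
    assert (wd : le w (dia x)) by (eapply ltr; [exact wz| eapply ltr; [apply meet_l|apply meet_r]]).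
    assert (wnx : le w (neg x)) by (eapply ltr; [exact wz| apply meet_r]).
    destruct (HS w Sw) as [s [c [[T [HT Es]] [Cc Ew]]]].
    assert (ws : le w s) by (rewrite Ew; apply meet_l).
    assert (wc : le w c) by (rewrite Ew; apply meet_r).
    assert (xs : le x s).
    { rewrite Es; apply inf_greatest; intros u Tu. apply (K1 u x w); auto.
      eapply ltr; [exact ws|]. rewrite Es; apply inf_lb; auto. }
    assert (xnc : ~ le x c).
    { intro xc. apply (proj1 Ha). apply self_neg. eapply ltr; [|exact wnx].
      rewrite Ew; apply meet_glb; auto. }
    destruct (atom_split x c Ha) as [xc|xc]; [contradiction|].
    assert (Oa' : is_open (join a (meet b (neg c)))) by
      (apply open_join; auto; apply open_meet; auto; apply open_neg; auto).
    assert (xa' : le x (join a (meet b (neg c)))) by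
      (eapply ltr; [|apply join_r]; apply meet_glb; auto).
    assert (Eb : join a (meet b (neg c)) = b).
    { apply NNPP; intro ne. apply Hcov. exists (join a (meet b (neg c))).
      split; auto. split; split; auto.
      - apply join_l.
      - intro E'; apply xna; rewrite E'; exact xa'.
      - apply join_lub; [exact ab|apply meet_l]. }
    apply xna. apply (K1 a x w); auto.
    apply ltr with (meet w (neg (neg c))).
    - apply meet_glb; [apply lrefl| rewrite neg_neg; auto].
    - apply lsplit. apply ltr with b; auto. rewrite <- Eb.
      apply join_lub; [apply join_r| eapply ltr; [apply meet_r|apply join_l]]. }
  exists b, x. unfold is_open in Ob; rewrite Ob.
  apply lanti; [apply meet_glb; [exact xb|apply dia_ext]| apply le_of_disj; exact Z].
Qed.

Lemma slicing_atom (T0 : @T0_algebra M) (G : M -> Prop) : slicing_filter_O G ->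
  exists y, atom y /\ forall u, G u <-> is_open u /\ le y u.
Proof.
  intros [[[Gop [Gtop [Gup Gmeet]]] [Gnb Gpr]] [a [b [Oa [Ob [Gb [nGa [[ab nab] Hcov]]]]]]]].
  set (d := meet b (neg a)).
  assert (Dopen : forall u, is_open u -> meet u d <> bot -> le d u).
  { intros u Ou H. assert (Eb : join a (meet b u) = b).
    { apply NNPP; intro ne; apply Hcov; exists (join a (meet b u)).
      split; [apply open_join; auto; apply open_meet; auto|]. split; split.
      - apply join_l.
      - intro E. apply H. apply le_bot.
        assert (ba : le (meet b u) a) by (rewrite E; apply join_r).
        apply ltr with (meet a (neg a)); [|apply compl_m].
        apply meet_glb.
        + eapply ltr; [|exact ba]. apply meet_glb; [eapply ltr; [apply meet_r|apply meet_l]|apply meet_l].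
        + eapply ltr; apply meet_r.
      - apply join_lub; [exact ab|apply meet_l].
      - exact ne. }
    apply lsplit. rewrite <- Eb at 1. apply join_mono; [apply lrefl|apply meet_r]. }
  assert (Dclosed : forall c, is_closed c -> meet c d <> bot -> le d c).
  { intros c Cc H. assert (Ea : join a (meet b (neg c)) = a).
    { apply NNPP; intro ne; apply Hcov; exists (join a (meet b (neg c))).
      split; [apply open_join; auto; apply open_meet; auto; apply open_neg; auto|]. split; split.
      - apply join_l.
      - intro E; apply ne; symmetry; exact E.
      - apply join_lub; [exact ab|apply meet_l].
      - intro E. apply H. apply le_bot.
        assert (dc : le d (neg c)).
        { apply lsplit. rewrite <- E at 1. apply join_mono; [apply lrefl|apply meet_r]. }
        eapply ltr; [apply meet_mono; [apply lrefl|exact dc]|apply compl_m]. }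
    apply le_of_disj. apply ltr with (meet a (neg a)); [|apply compl_m].
    apply meet_glb.
    - apply ltr with (meet b (neg c)).
      + apply meet_glb; [eapply ltr; apply meet_l|apply meet_r].
      + rewrite <- Ea. apply join_r.
    - eapply ltr; [apply meet_l|apply meet_r]. }
  assert (Dwlc : forall w, weakly_locally_closed w -> w <> bot -> le w d -> le d w).
  { intros w [s [c [[T [HT Es]] [Cc Ew]]]] wnz wd.
    assert (ws : le w s) by (rewrite Ew; apply meet_l).
    assert (wc : le w c) by (rewrite Ew; apply meet_r).
    rewrite Ew; apply meet_glb.
    - rewrite Es; apply inf_greatest; intros u Tu.
      assert (wu : le w u) by (eapply ltr; [exact ws| rewrite Es; apply inf_lb; auto]).
      apply Dopen; auto. intro E; apply wnz, le_bot; rewrite <- E; apply meet_glb; auto.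
    - apply Dclosed; auto. intro E; apply wnz, le_bot; rewrite <- E; apply meet_glb; auto. }
  assert (Dmin : forall e, e <> bot -> le e d -> le d e).
  { intros e ne ed. destruct (T0 e) as [S [HS ES]].
    assert (ne' : sup S <> bot) by (rewrite <- ES; exact ne).
    destruct (sup_nz S ne') as [w [Sw wnz]].
    assert (we : le w e) by (rewrite ES; apply sup_ub; auto).
    eapply ltr; [apply (Dwlc w); auto; eapply ltr; eauto| exact we]. }
  assert (dnz : d <> bot).
  { intro E. apply nab. apply lanti; auto. apply le_of_disj. fold d; rewrite E; apply lrefl. }
  exists d. split.
  - split; auto. intros [e [[_ be] [ed nde]]]. apply nde. apply lanti; auto.
  - intro u; split.
    + intro Gu. split; [apply Gop; auto|]. apply NNPP; intro ndu. apply nGa.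
      destruct (classic (meet u d = bot)) as [E|E]; [|exfalso; apply ndu; apply Dopen; auto; apply Gop; auto].
      apply (Gup (meet u b) a); auto.
      apply le_of_disj. apply ltr with (meet u d); [|rewrite E; apply lrefl].
      apply meet_glb; [eapply ltr; apply meet_l|].
      apply meet_glb; [eapply ltr; [apply meet_l|apply meet_r]|apply meet_r].
    + intros [Ou du].
      assert (Gj : G (join a u)).
      { apply (Gup b); auto; [apply open_join; auto| apply lunsplit; exact du]. }
      destruct (Gpr a u Oa Ou Gj); [contradiction|auto].
Qed.

Lemma TD_atom_lc (TD : @TD_algebra M) x : atom x -> locally_closed x.
Proof.
  intro Ha. destruct (TD x) as [S [HS ES]].
  assert (nz : sup S <> bot) by (rewrite <- ES; exact (proj1 Ha)).
  destruct (sup_nz S nz) as [w [Sw wnz]].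
  assert (wx : le w x) by (rewrite ES; apply sup_ub; auto).
  destruct (classic (w = x)) as [<-|ne]; [apply HS; auto|].
  exfalso; apply (proj2 Ha). exists w. split; split; auto using bot_le.
Qed.
End Main.

Lemma open_pres {M N : MTAlg} (f : M -> N) : MT_morphism f ->
  forall u, is_open u -> is_open (f u).
Proof.
  intros [_ Hbox] u H. unfold is_open in *. apply lanti; [apply box_defl|].
  rewrite <- H at 1. apply Hbox.
Qed.

Theorem proposition5p16 :
  (forall (M N : MTAlg) (f : M -> N),
      @T0_algebra M -> @T0_algebra N -> MT_morphism f ->
      (D_morphism f <-> restriction_frame_D_morphism f)) /\
  (forall (M N : MTAlg) (f : M -> N),
      @TD_algebra M -> @TD_algebra N -> MT_morphism f -> D_morphism f).
Proof.
  split.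
  - intros M N f T0M T0N Hf.
    pose proof (open_pres f Hf) as Op. destruct Hf as [Hh Hbox].
    assert (pre : forall y u, (is_open u /\ (is_open (f u) /\ le y (f u))) <->
                              is_open u /\ le (left_adj f y) u).
    { intros y u; split.
      - intros [Ou [_ H]]; split; auto; apply (adj_iff f Hh); auto.
      - intros [Ou H]; split; auto; split; auto; apply (adj_iff f Hh); auto. }
    split.
    + intros HD F HF. destruct (slicing_atom T0N F HF) as [y [Hy HFy]].
      assert (Hlc : locally_closed y) by (apply (slicing_lc T0N y F); auto).
      destruct (HD y Hy Hlc) as [Hx Hxl].
      apply (lc_slicing (left_adj f y)); auto.
      intro u. cbv beta. rewrite <- pre. split.
      * intros [Ou Fu]; split; auto; apply HFy; auto.
      * intros [Ou Fu]; split; auto; apply HFy; auto.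
    + intros HR y Hy Hlc.
      assert (Hx : atom (left_adj f y)) by (apply atom_adj; auto).
      split; auto.
      apply (slicing_lc T0M (left_adj f y) (fun a => is_open a /\ (fun u => is_open u /\ le y u) (f a))); auto.
      apply (HR (fun u => is_open u /\ le y u)). apply (lc_slicing y); auto. intro; reflexivity.
  - intros M N f TDM TDN [Hh Hbox] y Hy Hlc.
    assert (Hx : atom (left_adj f y)) by (apply atom_adj; auto).
    split; auto. apply TD_atom_lc; auto.
Qed.
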